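(* Let $n\ge2$ and let $\mathbf W$ be uniformly distributed on $\mathcal W^n$. Then for each $1\le j\le n-1$, \[ \mathbb E\left[\frac{B_j(\mathbf W)}{n}\right]=\frac{j}{\binom n2}, \] where $B_j(\mathbf w)$ is the number of leaves among the two children of the rank-$j$ internal node of $\mathbf w$.
   Context: $\mathcal W^n$ is the set of ranked leaf-labelled rooted binary tree topologies with leaves $\{1,\dots,n\}$: binary trees with $n-1$ internal nodes totally ordered by rank $1,\dots,n-1$ (rank 1 is the root; each internal node has larger rank than its parent). Its cardinality is $n!(n-1)!/2^{n-1}$. *)

(* Defs.v *)
From HB Require Import structures.
From mathcomp Require Import all_boot all_algebra.
Set Implicit Arguments. Unset Strict Implicit. Unset Printing Implicit Defensive.

(* Ranked leaf-labelled rooted binary trees.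
   RLeaf a         : a leaf with label a
   RNode k l r     : an internal node of rank k with children l and r. *)
Inductive rtree := RLeaf of nat | RNode of nat & rtree & rtree.

Scheme Equality for rtree.
HB.instance Definition _ := hasDecEq.Build rtree (compareP rtree_eq_dec).

Fixpoint leaves (t : rtree) : seq nat :=
  match t with RLeaf a => [:: a] | RNode _ l r => leaves l ++ leaves r end.

Fixpoint ranks (t : rtree) : seq nat :=
  match t with RLeaf _ => [::] | RNode k l r => k :: ranks l ++ ranks r end.

Definition child_ok (k : nat) (t : rtree) : bool :=
  match t with RLeaf _ => true | RNode k' _ _ => k < k' end.

Fixpoint rank_ok (t : rtree) : bool :=
  match t with
  | RLeaf _ => true
  | RNode k l r => [&& child_ok k l, child_ok k r, rank_ok l & rank_ok r]
  end.

Fixpoint minleaf (t : rtree) : nat :=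
  match t with RLeaf a => a | RNode _ l r => minn (minleaf l) (minleaf r) end.

(* Children are unordered (tree topologies): we use the canonical
   representative where the left child has the smaller minimal leaf label. *)
Fixpoint canon (t : rtree) : bool :=
  match t with
  | RLeaf _ => true
  | RNode _ l r => [&& minleaf l < minleaf r, canon l & canon r]
  end.

Definition inW (n : nat) (w : rtree) : bool :=
  [&& perm_eq (leaves w) (iota 1 n), perm_eq (ranks w) (iota 1 n.-1),
      rank_ok w & canon w].

Definition enumW (n : nat) (s : seq rtree) : Prop :=
  uniq s /\ forall w, (w \in s) = inW n w.

Definition is_leaf (t : rtree) : bool :=
  if t is RLeaf _ then true else false.

Fixpoint B (j : nat) (t : rtree) : nat :=
  match t with
  | RLeaf _ => 0
  | RNode k l r =>
      if k == j then is_leaf l + is_leaf r else B j l + B j r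
  end.

(* Main.v *)
Require Import Defs.
From mathcomp Require Import all_boot all_algebra.
From mathcomp Require Import zify ring lra.
Import GRing.Theory Num.Theory.
Local Open Scope ring_scope.


Fixpoint graft (a b k : nat) (t : rtree) : rtree :=
  match t with
  | RLeaf x => if x == a then RNode k (RLeaf a) (RLeaf b) else RLeaf x
  | RNode k' l r => RNode k' (graft a b k l) (graft a b k r)
  end.

Fixpoint ungraft (k : nat) (t : rtree) : rtree :=
  match t with
  | RLeaf x => RLeaf x
  | RNode k' l r => if k' == k then RLeaf (minleaf t)
                    else RNode k' (ungraft k l) (ungraft k r)
  end.

Fixpoint cherry (k : nat) (t : rtree) : option (nat * nat) :=
  match t with
  | RLeaf _ => None
  | RNode k' l r => if k' == k then Some (minleaf l, minleaf r)
                    else if cherry k l is Some p then Some p else cherry k r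
  end.

Definition leafval (phi : nat -> rat) (t : rtree) : rat :=
  if t is RLeaf x then phi x else 0.

Fixpoint lc (j : nat) (phi : nat -> rat) (t : rtree) : rat :=
  match t with
  | RLeaf _ => 0
  | RNode k l r => if k == j then leafval phi l + leafval phi r
                   else lc j phi l + lc j phi r
  end.

Lemma leaves_graft a b k t :
  perm_eq (leaves (graft a b k t)) (nseq (count_mem a (leaves t)) b ++ leaves t).
Proof.
elim: t => [x|k' l IHl r IHr] /=.
  rewrite /= eq_sym; case: eqP => [->|_] /=; first last.
    by [].

  by apply/permP => p /=; rewrite !addn0 addnC.
apply: perm_trans (perm_cat IHl IHr) _.
apply/permP => p; rewrite /= ?count_cat !count_nseq ?count_cat ?mulnDr; lia.
Qed.

Lemma ranks_graft a b k t :
  perm_eq (ranks (graft a b k t)) (nseq (count_mem a (leaves t)) k ++ ranks t).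
Proof.
elim: t => [x|k' l IHl r IHr] /=.
  by case: (x == a).
have H : perm_eq (k' :: (ranks (graft a b k l) ++ ranks (graft a b k r)))
   (k' :: ((nseq (count_mem a (leaves l)) k ++ ranks l) ++ (nseq (count_mem a (leaves r)) k ++ ranks r))).
  by rewrite perm_cons; apply: perm_cat IHl IHr.
apply: perm_trans H _.
apply/permP => p; rewrite /= ?count_cat !count_nseq /= ?count_cat ?mulnDr; lia.
Qed.

Lemma child_ok_graft a b k k' t :
  child_ok k' t -> (k' < k)%N -> child_ok k' (graft a b k t).
Proof. by case: t => [x|k'' l r] //= _ lt; case: eqP. Qed.

Lemma rank_ok_graft a b k t :
  rank_ok t -> all (fun r => r < k)%N (ranks t) -> rank_ok (graft a b k t).
Proof.
elim: t => [x|k' l IHl r IHr] /=; first by case: eqP.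
case/and4P=> cl cr rl rr; rewrite all_cat => /andP[lk /andP[al ar]].
by rewrite !child_ok_graft // IHl // IHr.
Qed.

Lemma minleaf_graft a b k t : (a < b)%N -> minleaf (graft a b k t) = minleaf t.
Proof.
move=> ab; elim: t => [x|k' l IHl r IHr] /=.
  by case: eqP => [->|] //=; rewrite /minn ab.
by rewrite IHl IHr.
Qed.

Lemma canon_graft a b k t : (a < b)%N -> canon t -> canon (graft a b k t).
Proof.
move=> ab; elim: t => [x|k' l IHl r IHr] /=; first by case: eqP => //= _; rewrite ab.
by case/and3P=> m cl cr; rewrite !minleaf_graft // m IHl // IHr.
Qed.

Lemma graft_id a b k t : a \notin leaves t -> graft a b k t = t.
Proof.
elim: t => [x|k' l IHl r IHr] /=.
  by rewrite inE eq_sym => /negbTE ->.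
by rewrite mem_cat negb_or => /andP[al ar]; rewrite IHl // IHr.
Qed.

Lemma ungraft_id k t : k \notin ranks t -> ungraft k t = t.
Proof.
elim: t => [x|k' l IHl r IHr] //=.
rewrite inE mem_cat !negb_or eq_sym => /and3P[/negbTE -> al ar].
by rewrite IHl // IHr.
Qed.

Lemma minleaf_ungraft k t : minleaf (ungraft k t) = minleaf t.
Proof.
elim: t => [x|k' l IHl r IHr] //=.
by case: eqP => //= _; rewrite IHl IHr.
Qed.

Lemma child_ok_ungraft k k' t : child_ok k' t -> child_ok k' (ungraft k t).
Proof. by case: t => //= k'' l r; case: eqP. Qed.

Lemma rank_ok_ungraft k t : rank_ok t -> rank_ok (ungraft k t).
Proof.
elim: t => [x|k' l IHl r IHr] //=.
case: eqP => //= _ /and4P[cl cr rl rr].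
by rewrite IHl // IHr // !child_ok_ungraft.
Qed.

Lemma canon_ungraft k t : canon t -> canon (ungraft k t).
Proof.
elim: t => [x|k' l IHl r IHr] //=.
case: eqP => //= _ /and3P[m cl cr].
by rewrite !minleaf_ungraft m IHl // IHr.
Qed.

Lemma ungraft_graft a b k t :
  k \notin ranks t -> (a < b)%N -> ungraft k (graft a b k t) = t.
Proof.
move=> kt ab; elim: t kt => [x|k' l IHl r IHr] /=.
  by case: eqP => [->|] //= _; rewrite eqxx /minn ab.
rewrite inE mem_cat !negb_or eq_sym => /and3P[/negbTE -> al ar].
by rewrite IHl // IHr.
Qed.

Lemma cherry_none k t : k \notin ranks t -> cherry k t = None.
Proof.
elim: t => [x|k' l IHl r IHr] //=.
rewrite inE mem_cat !negb_or eq_sym => /and3P[/negbTE -> al ar].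
by rewrite IHl // IHr.
Qed.

Lemma cherry_graft a b k t :
  k \notin ranks t -> a \in leaves t -> cherry k (graft a b k t) = Some (a, b).
Proof.
elim: t => [x|k' l IHl r IHr] /=.
  by move=> _; rewrite inE => /eqP ->; rewrite !eqxx /= eqxx.
rewrite inE mem_cat !negb_or eq_sym => /and3P[/negbTE -> kl kr].
rewrite mem_cat; case al: (a \in leaves l) => /=.
  by rewrite IHl.
by move=> ar; rewrite graft_id ?al // cherry_none // IHr.
Qed.

Lemma leafval_graft phi a b k t :
  leafval phi (graft a b k t) = leafval (fun x => if x == a then 0 else phi x) t.
Proof. by case: t => [x|k' l r] //=; case: eqP. Qed.

Lemma lc_graft_ne j phi a b k t : j != k ->
  lc j phi (graft a b k t) = lc j (fun x => if x == a then 0 else phi x) t.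
Proof.
move=> jk; elim: t => [x|k' l IHl r IHr] /=.
  by case: eqP => //= _; rewrite eq_sym (negbTE jk) addr0.
by rewrite !leafval_graft IHl IHr.
Qed.

Lemma lc_graft_eq phi a b k t : k \notin ranks t ->
  lc k phi (graft a b k t) = (count_mem a (leaves t))%:R * (phi a + phi b).
Proof.
elim: t => [x|k' l IHl r IHr] /=.
  by move=> _; rewrite eq_sym; case: eqP => /= [->|]; rewrite ?eqxx ?mul1r ?mul0r.
rewrite inE mem_cat !negb_or eq_sym => /and3P[/negbTE -> kl kr].
by rewrite IHl // IHr // count_cat natrD mulrDl.
Qed.

Lemma B_lc j t : ((B j t)%:R : rat) = lc j (fun _ => 1) t.
Proof.
elim: t => [x|k l IHl r IHr] //=.
case: eqP => _; last by rewrite natrD IHl IHr.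
by rewrite natrD; case: l {IHl} => [?|???]; case: r {IHr} => [?|???].
Qed.


Lemma cat_uniq_l {T : eqType} {s1 s2 : seq T} : uniq (s1 ++ s2) -> uniq s1.
Proof. by rewrite cat_uniq => /and3P[]. Qed.
Lemma cat_uniq_r {T : eqType} {s1 s2 : seq T} : uniq (s1 ++ s2) -> uniq s2.
Proof. by rewrite cat_uniq => /and3P[]. Qed.

Lemma uniq_cat_notin {s1 s2 : seq nat} {x} :
  uniq (s1 ++ s2) -> x \in s1 -> x \notin s2.
Proof.
rewrite cat_uniq => /and3P[_ /hasPn H _] xs1; apply/negP => xs2.
by move: (H x xs2); rewrite /= xs1.
Qed.

Lemma uniq_cat_notin2 {s1 s2 : seq nat} {x} :
  uniq (s1 ++ s2) -> x \in s2 -> x \notin s1.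
Proof. by rewrite uniq_catC; apply: uniq_cat_notin. Qed.

Lemma cherry_ex k t : rank_ok t -> canon t -> uniq (ranks t) -> uniq (leaves t) ->
  k \in ranks t -> all (fun r => r <= k)%N (ranks t) ->
  exists a b, [/\ (a < b)%N, a \in leaves t & t = graft a b k (ungraft k t)].
Proof.
elim: t => [x|k' l IHl r IHr] //=.
case/and4P=> cl cr rl rr /and3P[m canl canr] /andP[k'n ur] ul.
rewrite inE => kin /andP[k'k] ; rewrite all_cat => /andP[all_l all_r].
case: (eqVneq k' k) => [ek|nk].
  subst k'.
  move: cl cr m all_l all_r; case: l {IHl rl canl ul ur k'n kin} => [x|k1 l1 r1];
    case: r {IHr rr canr} => [y|k2 l2 r2] //=.
  - move=> _ _ m _ _; exists x, y; split => //; first by rewrite inE eqxx.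
    by rewrite /minn m eqxx.
  - by move=> _ lt _ _ /andP[le _]; lia.
  - by move=> lt _ _ /andP[le _] _; lia.
  - by move=> lt _ _ /andP[le _] _; lia.
rewrite eq_sym (negbTE nk) /= mem_cat in kin *.
case/orP: kin => [kl|kr].
  have [a [b [ab al El]]] := IHl rl canl (cat_uniq_l ur) (cat_uniq_l ul) kl all_l.
  exists a, b; split => //; first by rewrite mem_cat al.
  rewrite -El ungraft_id ?(uniq_cat_notin ur kl) // graft_id //.
  exact: (uniq_cat_notin ul al).
have [a [b [ab ar Er]]] := IHr rr canr (cat_uniq_r ur) (cat_uniq_r ul) kr all_r.
exists a, b; split => //; first by rewrite mem_cat ar orbT.
rewrite -Er ungraft_id ?(uniq_cat_notin2 ur kr) // graft_id //.
exact: (uniq_cat_notin2 ul ar).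
Qed.


Definition pairs (L : seq nat) : seq (nat * nat) :=
  [seq (a, b) | a <- L, b <- [seq b <- L | (a < b)%N]].

Fixpoint E (m : nat) (L : seq nat) : seq rtree :=
  if m is m'.+1 then [seq graft p.1 p.2 m w | p <- pairs L, w <- E m' (rem p.2 L)]
  else [seq RLeaf x | x <- L].

Definition inWL (L : seq nat) (w : rtree) : bool :=
  [&& perm_eq (leaves w) L, perm_eq (ranks w) (iota 1 (size L).-1),
      rank_ok w & canon w].

Lemma mem_pairs L a b : ((a, b) \in pairs L) = [&& a \in L, b \in L & (a < b)%N].
Proof.
apply/allpairsPdep/idP.
  by case=> x [y [xL]]; rewrite mem_filter => /andP[xy yL] [-> ->]; rewrite xL yL xy.
case/and3P=> aL bL ab; exists a, b; split => //.
by rewrite mem_filter ab bL.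
Qed.

Lemma iota_perm m : perm_eq (iota 1 m.+1) (m.+1 :: iota 1 m).
Proof. by rewrite -(addn1 m) iotaD cats1 perm_rcons add1n addn1. Qed.

Lemma facts_of_inWL m L a b w : uniq L -> size L = m.+2 ->
  a \in L -> b \in L -> (a < b)%N -> inWL (rem b L) w ->
  [/\ a \in leaves w, m.+1 \notin ranks w, count_mem a (leaves w) = 1%N
    & all (fun r => r < m.+1)%N (ranks w)].
Proof.
move=> uL sL aL bL ab /and4P[Pl Pr _ _].
have arem : a \in rem b L.
  by rewrite (mem_rem_uniq _ uL) inE aL andbT; apply/eqP => e; rewrite e ltnn in ab.
rewrite size_rem // sL /= in Pr.
split.
- by rewrite (perm_mem Pl).
- by rewrite (perm_mem Pr) mem_iota; apply/negP; lia.
- by rewrite (permP Pl) count_uniq_mem ?arem // rem_uniq.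
- apply/allP => r rin; move: rin; rewrite (perm_mem Pr) mem_iota; lia.
Qed.

Arguments facts_of_inWL {m L a b w}.

Lemma mem_E m L : uniq L -> size L = m.+1 -> forall w, (w \in E m L) = inWL L w.
Proof.
elim: m L => [|m IH] L uL sL w.
  case: L uL sL => [|x [|y L]] //= _ _.
  rewrite inE /inWL /=; apply/eqP/idP => [->|]; first by rewrite /= !perm_refl.
  case: w => [y|k l r] /=.
    by case/andP=> P _; have := perm_mem P y; rewrite !inE eqxx => /esym/eqP ->.
  by case/and5P=> _ P _ _ _; have := perm_size P.
apply/idP/idP.
  case/allpairsPdep => [[a b] [w' [pL wE ->]]] /=.
  move: pL; rewrite mem_pairs => /and3P[aL bL ab].
  have urem : uniq (rem b L) by rewrite rem_uniq.
  have srem : size (rem b L) = m.+1 by rewrite size_rem // sL.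
  move: wE; rewrite /= IH // => Hw.
  have [aw kw ca allw] := facts_of_inWL uL sL aL bL ab Hw.
  case/and4P: Hw => Pl Pr ro ca'.
  rewrite srem /= in Pr.
  apply/and4P; split.
  - apply: perm_trans (leaves_graft _ _ _ _) _; rewrite ca /=.
    by rewrite perm_sym; apply: perm_trans (perm_to_rem bL) _; rewrite perm_cons perm_sym.
  - rewrite sL /=; apply: perm_trans (ranks_graft _ _ _ _) _; rewrite ca /=.
    by rewrite perm_sym; apply: perm_trans (iota_perm m) _; rewrite perm_cons perm_sym.
  - exact: rank_ok_graft.
  - exact: canon_graft.
case/and4P => Pl Pr ro ca.
have {}Pr : perm_eq (ranks w) (iota 1 m.+1) by move: Pr; rewrite sL.
have ur : uniq (ranks w) by rewrite (perm_uniq Pr) iota_uniq.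
have ul : uniq (leaves w) by rewrite (perm_uniq Pl).
have kin : m.+1 \in ranks w by rewrite (perm_mem Pr) mem_iota; lia.
have alk : all (fun r => r <= m.+1)%N (ranks w).
  by apply/allP => r; rewrite (perm_mem Pr) mem_iota; lia.
have [a [b [ab aw Ew]]] := @cherry_ex m.+1 w ro ca ur ul kin alk.
set w' := ungraft m.+1 w in Ew.
have Pg := leaves_graft a b m.+1 w'; rewrite -Ew in Pg.
have Rg := ranks_graft a b m.+1 w'; rewrite -Ew in Rg.
have c1 : count_mem a (leaves w') = 1%N.
  have := permP Pg (pred1 a); rewrite count_cat count_nseq count_uniq_mem // aw /=.
  have -> : (b == a) = false by apply/eqP => e; rewrite e ltnn in ab.
  by rewrite mul0n add0n => <-.
rewrite c1 /= in Pg Rg.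
have bL : b \in L by rewrite -(perm_mem Pl) (perm_mem Pg) inE eqxx.
have aL : a \in L by rewrite -(perm_mem Pl).
apply/allpairsPdep; exists (a, b), w'; split => //.
  by rewrite mem_pairs aL bL ab.
rewrite /= IH ?rem_uniq ?size_rem ?sL //.
apply/and4P; split.
- have Pg2 : perm_eq (b :: leaves w') (leaves w) by rewrite perm_sym.
  rewrite -(perm_cons b); exact: perm_trans Pg2 (perm_trans Pl (perm_to_rem bL)).
- have Rg2 : perm_eq (m.+1 :: ranks w') (ranks w) by rewrite perm_sym.
  rewrite size_rem // sL /= -(perm_cons m.+1); exact: perm_trans Rg2 (perm_trans Pr (iota_perm m)).
- exact: rank_ok_ungraft.
- exact: canon_ungraft.
Qed.


Lemma uniq_pairs L : uniq L -> uniq (pairs L).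
Proof.
move=> uL; apply: allpairs_uniq_dep => //.
- by move=> x _; exact: filter_uniq.
- by move=> [x1 y1] [x2 y2] _ _ /= [e1 e2]; subst.
Qed.

Lemma graft_inj m L p1 p2 w1 w2 : uniq L -> size L = m.+2 ->
  p1 \in pairs L -> p2 \in pairs L ->
  w1 \in E m (rem p1.2 L) -> w2 \in E m (rem p2.2 L) ->
  graft p1.1 p1.2 m.+1 w1 = graft p2.1 p2.2 m.+1 w2 -> p1 = p2 /\ w1 = w2.
Proof.
case: p1 => a1 b1; case: p2 => a2 b2 uL sL /=.
rewrite !mem_pairs => /and3P[a1L b1L ab1] /and3P[a2L b2L ab2].
rewrite !mem_E ?rem_uniq ?size_rem ?sL // => H1 H2 eq.
have [a1w k1 _ _] := facts_of_inWL uL sL a1L b1L ab1 H1.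
have [a2w k2 _ _] := facts_of_inWL uL sL a2L b2L ab2 H2.
have := congr1 (cherry m.+1) eq; rewrite !cherry_graft // => -[e1 e2]; subst.
split => //.
by rewrite -(@ungraft_graft a2 b2 m.+1 w1) // eq ungraft_graft.
Qed.

Arguments graft_inj {m L p1 p2 w1 w2}.

Lemma uniq_E m L : uniq L -> size L = m.+1 -> uniq (E m L).
Proof.
elim: m L => [|m IH] L uL sL /=.
  by rewrite map_inj_uniq // => x y [].
apply: allpairs_uniq_dep.
- exact: uniq_pairs.
- case=> a b; rewrite mem_pairs => /and3P[aL bL ab]; apply: IH.
    exact: rem_uniq.
  by rewrite size_rem // sL.
- move=> u1 u2 /allpairsPdep [p1 [w1 [p1L w1E ->]]] /allpairsPdep [p2 [w2 [p2L w2E ->]]] /= eq.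
  by have [-> ->] := graft_inj uL sL p1L p2L w1E w2E eq.
Qed.

Lemma sum_const_cond (T : Type) (s : seq T) (P : pred T) (c : rat) :
  \sum_(x <- s | P x) c = (count P s)%:R * c.
Proof.
elim: s => [|x s IH]; first by rewrite big_nil mul0r.
rewrite big_cons /= IH; case: (P x) => /=; last by rewrite add0n.
by rewrite -add1n natrD mulrDl mul1r.
Qed.

Lemma bin2_mul n : ('C(n, 2) * 2 = n * n.-1)%N.
Proof.
elim: n => // n IH; rewrite binS bin1 mulnDl IH.
case: n {IH} => //= n; nia.
Qed.

Lemma count_lt_gt (L : seq nat) x : uniq L -> x \in L ->
  (count (fun y => x < y) L + count (fun y => y < x) L = (size L).-1)%N.
Proof.
move=> uL xL.
have H1 := count_predC (pred1 x) L.
have H2 : count (pred1 x) L = 1%N by rewrite count_uniq_mem // xL.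
have H3 := count_predUI (fun y => x < y)%N (fun y => y < x)%N L.
have H4 : count (predI (fun y => x < y)%N (fun y => y < x)%N) L = 0%N.
  rewrite (eq_count (a2 := pred0)) ?count_pred0 // => y /=; apply/negP; lia.
have H5 : count (predU (fun y => x < y)%N (fun y => y < x)%N) L
          = count (predC (pred1 x)) L.
  by apply: eq_count => y /=; rewrite neq_ltn orbC.
by rewrite -H3 H4 addn0 H5 -H1 H2.
Qed.

Lemma pairs_sum L (phi : nat -> rat) : uniq L ->
  \sum_(p <- pairs L) (phi p.1 + phi p.2) = ((size L).-1)%:R * \sum_(x <- L) phi x.
Proof.
move=> uL; rewrite big_allpairs_dep /=.
under eq_bigr => a _ do rewrite big_filter big_split /=.
rewrite big_split /= [X in _ + X](exchange_big_dep xpredT) //= -big_split /= mulr_sumr.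
apply: eq_big_seq => x xL /=.
rewrite !sum_const_cond -mulrDl -natrD.
by rewrite count_lt_gt // mulrC.
Qed.

Lemma size_pairs L : uniq L -> ((size (pairs L))%:R : rat) = ('C(size L, 2))%:R.
Proof.
move=> uL; have H := pairs_sum L (fun _ => 1) uL.
rewrite !(sum_const_cond _ _ xpredT) !count_predT /= in H.
have HC := congr1 (fun n => n%:R : rat) (bin2_mul (size L)).
rewrite /= !natrM in HC.
apply: (mulIf (_ : (2 : rat) != 0)) => //.
rewrite HC; move: H; rewrite mulr1 => ->; ring.
Qed.

Lemma mask_sum L a b (phi : nat -> rat) : uniq L -> a \in L -> b \in L -> a != b ->
  \sum_(x <- rem b L) (if x == a then 0 else phi x) = \sum_(x <- L) phi x - (phi a + phi b).
Proof.
move=> uL aL bL ab.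
have arem : a \in rem b L by rewrite (mem_rem_uniq _ uL) inE aL ab.
rewrite [in RHS](big_rem b) //= [in RHS](big_rem a arem) [in LHS](big_rem a arem) /= eqxx.
rewrite (eq_big_seq (fun x => phi x)); first by ring.
move=> x; rewrite (mem_rem_uniq _ (rem_uniq _ uL)) inE => /andP[xa _].
by rewrite (negbTE xa).
Qed.


Fixpoint Nr (m : nat) : rat := if m is m'.+1 then ('C(m'.+2, 2))%:R * Nr m' else 1.

Lemma Nr_gt0 m : 0 < Nr m.
Proof. by elim: m => //= m IH; rewrite mulr_gt0 // ltr0n bin_gt0. Qed.

Lemma binr2 n : (('C(n.+1, 2))%:R : rat) = (n.+1 * n)%:R / 2.
Proof.
have := congr1 (fun k => k%:R : rat) (bin2_mul n.+1); rewrite /= natrM => <-.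
by field.
Qed.

Lemma size_E m L : uniq L -> size L = m.+1 -> ((size (E m L))%:R : rat) = Nr m.
Proof.
elim: m L => [|m IH] L uL sL /=; first by rewrite size_map sL.
rewrite -sum1_size natr_sum big_allpairs_dep /=.
transitivity (\sum_(p <- pairs L) Nr m).
  apply: eq_big_seq => -[a b]; rewrite mem_pairs => /and3P[aL bL ab] /=.
  rewrite -(IH (rem b L)) ?rem_uniq ?size_rem ?sL // -sum1_size natr_sum.
  by [].
by rewrite (sum_const_cond _ _ xpredT) count_predT size_pairs // sL mulrC.
Qed.

Lemma sum_lc m L (phi : nat -> rat) j : uniq L -> size L = m.+1 -> (1 <= j <= m)%N ->
  \sum_(w <- E m L) lc j phi w
    = (2 * j)%:R / (m * m.+1)%:R * Nr m * \sum_(x <- L) phi x.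
Proof.
elim: m L phi => [|m IH] L phi uL sL jm; first by lia.
rewrite /= big_allpairs_dep /=.
have sp := size_pairs L uL; rewrite sL in sp.
have Cm := binr2 m.+1.
case: (eqVneq j m.+1) => [-> | jn].
  transitivity (\sum_(p <- pairs L) Nr m * (phi p.1 + phi p.2)).
    apply: eq_big_seq => -[a b]; rewrite mem_pairs => /and3P[aL bL ab] /=.
    have Hw : {in E m (rem b L), forall w,
        lc m.+1 phi (graft a b m.+1 w) = phi a + phi b}.
      move=> w; rewrite mem_E ?rem_uniq ?size_rem ?sL // => H.
      have [_ kw c1 _] := facts_of_inWL uL sL aL bL ab H.
      by rewrite lc_graft_eq // c1 mul1r.
    rewrite (eq_big_seq _ Hw) (sum_const_cond _ _ xpredT) count_predT.
    by rewrite size_E ?rem_uniq ?size_rem ?sL.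
  rewrite -mulr_sumr pairs_sum // sL /= Cm !natrM.
  field.
  have h := ler0n rat m.
  by repeat (apply/andP; split); apply/negP => /eqP; lra.
transitivity (\sum_(p <- pairs L) (2 * j)%:R / (m * m.+1)%:R * Nr m *
                 (\sum_(x <- L) phi x - (phi p.1 + phi p.2))).
  apply: eq_big_seq => -[a b]; rewrite mem_pairs => /and3P[aL bL ab] /=.
  under eq_bigr => w _ do rewrite lc_graft_ne //.
  rewrite IH ?rem_uniq ?size_rem ?sL //; last by lia.
  by rewrite mask_sum // neq_ltn ab.
rewrite -mulr_sumr sumrB pairs_sum // (sum_const_cond _ _ xpredT) count_predT sp sL /=.
rewrite Cm !natrM.
have m0 : (0 < m%:R :> rat) by rewrite ltr0n; lia.
field.
by repeat (apply/andP; split); apply/negP => /eqP; lra.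
Qed.


Theorem corollary3 (n j : nat) :
  (2 <= n)%N -> (1 <= j <= n.-1)%N ->
  (exists s : seq rtree, enumW n s) /\
  forall s : seq rtree, enumW n s ->
    (\sum_(w <- s) ((B j w)%:R / n%:R)) / (size s)%:R
      = j%:R / ('C(n, 2))%:R :> rat.
Proof.
case: n => // n n2 /= jr.
have uL := iota_uniq 1 n.+1.
have sL : size (iota 1 n.+1) = n.+1 by rewrite size_iota.
have memE : forall w, (w \in E n (iota 1 n.+1)) = inW n.+1 w.
  by move=> w; rewrite mem_E // /inWL /inW size_iota.
split.
  by exists (E n (iota 1 n.+1)); split; [exact: uniq_E | exact: memE].
move=> s [us ms].
have ps : perm_eq s (E n (iota 1 n.+1)).
  by apply: uniq_perm => // [|w]; [exact: uniq_E | rewrite ms memE].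
rewrite (perm_big _ ps) (perm_size ps).
under eq_bigr => w _ do rewrite B_lc.
rewrite -mulr_suml sum_lc // size_E // (sum_const_cond _ _ xpredT) count_predT sL.
clear ms ps memE uL sL us.
case: n n2 jr => // n _ jr.
rewrite binr2 !natrM.
have h := Nr_gt0 n.+1.
have h2 := ler0n rat n.
field.
by repeat (apply/andP; split); apply/negP => /eqP; lra.
Qed.
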